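(* Let $x\in\mathbb{R}^n$, $\alpha>0$, $\kappa>0$ and $d_{\min}>0$. Let $\mathcal{D}=\{d_1,\ldots,d_p\}\subset\mathbb{R}^n$ be a positive spanning set of $\mathbb{R}^n$ with $\operatorname{cm}(\mathcal{D})\ge\kappa$ and $\|d_i\|\ge d_{\min}\alpha$ for all $i=1,\ldots,p$. Then $\mathcal{D}$ is a $\Lambda$-positive spanning set for $B(x,\alpha)$ with $\Lambda:=\frac{1}{d_{\min}\kappa}$.
   Context: $\|\cdot\|$ is the Euclidean norm and $B(y,r)=\{z\in\mathbb{R}^n:\|z-y\|\le r\}$. A set $\{d_1,\ldots,d_p\}\subset\mathbb{R}^n$ is a positive spanning set of $\mathbb{R}^n$ if every $v\in\mathbb{R}^n$ can be written $v=\sum_i c_id_i$ with all $c_i\ge 0$. The cosine measure of a finite set $\mathcal{D}$ is $\operatorname{cm}(\mathcal{D}):=\min_{v\neq 0}\max_{d\in\mathcal{D},\, d\neq 0}\frac{d^Tv}{\|d\|\,\|v\|}$. Given $x\in\mathbb{R}^n$, $\alpha>0$ and $\Lambda>0$, a set $\{d_1,\ldots,d_p\}$ is a $\Lambda$-positive spanning set for $B(x,\alpha)$ if for every $v\in B(0,\alpha)$ there exists $c(v)\in\mathbb{R}^p$ with $c(v)\ge0$ componentwise such that $v=\sum_{i=1}^p c_i(v)d_i$ and $\sum_{i=1}^p c_i(v)\le\Lambda$. *)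

(* Defs.v *)
From HB Require Import structures.
From mathcomp Require Import all_boot all_order all_algebra.
From mathcomp Require Import boolp classical_sets reals.
Set Implicit Arguments. Unset Strict Implicit. Unset Printing Implicit Defensive.
Import Order.TTheory GRing.Theory Num.Theory.
Local Open Scope ring_scope.
Local Open Scope classical_set_scope.

Section Defs.
Variable R : realType.
Variable n : nat.

Definition dotp (u v : 'rV[R]_n) : R := \sum_(k < n) u 0 k * v 0 k.
Definition enorm (v : 'rV[R]_n) : R := Num.sqrt (dotp v v).

Definition cball (y : 'rV[R]_n) (r : R) : 'rV[R]_n -> Prop :=
  fun z => enorm (z - y) <= r.

Definition pos_spanning (p : nat) (d : 'I_p -> 'rV[R]_n) : Prop :=
  forall v : 'rV[R]_n, exists c : 'I_p -> R,
    (forall i, 0 <= c i) /\ v = \sum_(i < p) c i *: d i.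

(* cosine measure: min over v <> 0 of max over nonzero d in D of the cosine;
   the min/max are attained, so they coincide with inf/sup. *)
Definition cos_max (p : nat) (d : 'I_p -> 'rV[R]_n) (v : 'rV[R]_n) : R :=
  sup [set t : R | exists i : 'I_p, d i != 0 /\
        t = dotp (d i) v / (enorm (d i) * enorm v)].

Definition cm (p : nat) (d : 'I_p -> 'rV[R]_n) : R :=
  inf [set t : R | exists v : 'rV[R]_n, v != 0 /\ t = cos_max d v].

Definition Lambda_pss (p : nat) (d : 'I_p -> 'rV[R]_n)
    (x : 'rV[R]_n) (alpha Lambda : R) : Prop :=
  forall v : 'rV[R]_n, cball 0 alpha v ->
    exists c : 'I_p -> R, (forall i, 0 <= c i) /\
      v = \sum_(i < p) c i *: d i /\ \sum_(i < p) c i <= Lambda.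
End Defs.

(* Main.v *)
Require Import Defs.
From HB Require Import structures.
From mathcomp Require Import all_boot all_order all_algebra.
From mathcomp Require Import reals.
From mathcomp Require Import all_classical all_reals all_analysis.
From mathcomp Require Import ring lra.
Import Order.TTheory GRing.Theory Num.Theory.
Import numFieldNormedType.Exports.
Local Open Scope ring_scope.

Module Aux.
Set Implicit Arguments. Unset Strict Implicit.
Section Aux.
Variables (R : realType) (n : nat).
Implicit Types u v w : 'rV[R]_n.

Lemma dotpC u v : dotp u v = dotp v u.
Proof. by rewrite /dotp; apply: eq_bigr => k _; rewrite mulrC. Qed.

Lemma dotpDl u w v : dotp (u + w) v = dotp u v + dotp w v.
Proof. by rewrite /dotp -big_split; apply: eq_bigr => k _; rewrite mxE mulrDl. Qed.

Lemma dotpZl a u v : dotp (a *: u) v = a * dotp u v.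
Proof. by rewrite /dotp mulr_sumr; apply: eq_bigr => k _; rewrite mxE mulrA. Qed.

Lemma dotpNl u v : dotp (- u) v = - dotp u v.
Proof. by rewrite -scaleN1r dotpZl mulN1r. Qed.

Lemma dotpBl u w v : dotp (u - w) v = dotp u v - dotp w v.
Proof. by rewrite dotpDl dotpNl. Qed.

Lemma dotpDr u w v : dotp v (u + w) = dotp v u + dotp v w.
Proof. by rewrite dotpC dotpDl !(dotpC v). Qed.

Lemma dotpZr a u v : dotp v (a *: u) = a * dotp v u.
Proof. by rewrite dotpC dotpZl dotpC. Qed.

Lemma dotpBr u w v : dotp v (u - w) = dotp v u - dotp v w.
Proof. by rewrite dotpC dotpBl !(dotpC v). Qed.

Lemma dotp_ge0 u : 0 <= dotp u u.
Proof. by apply: sumr_ge0 => k _; rewrite -expr2 sqr_ge0. Qed.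

Lemma dotp_eq0 u : dotp u u = 0 -> u = 0.
Proof.
move=> h; apply/matrixP => i k; rewrite mxE ord1.
have hp : forall j : 'I_n, xpredT j -> 0 <= u 0 j * u 0 j.
  by move=> j _; rewrite -expr2 sqr_ge0.
have := @psumr_eq0P _ _ xpredT (fun k => u 0 k * u 0 k) hp h k isT.
by move/eqP; rewrite mulf_eq0 orbb => /eqP.
Qed.

Lemma enorm_sq u : enorm u ^+ 2 = dotp u u.
Proof. by rewrite /enorm sqr_sqrtr // dotp_ge0. Qed.

Lemma enorm_ge0 u : 0 <= enorm u.
Proof. exact: sqrtr_ge0. Qed.

Lemma dotp_sub_sq u w : dotp (u - w) (u - w) = dotp u u - 2 * dotp u w + dotp w w.
Proof. rewrite dotpBl !dotpBr (dotpC w u); ring. Qed.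

Lemma CS u v : dotp u v <= enorm u * enorm v.
Proof.
have [a0|a0] := eqVneq (enorm u) 0.
  have u0 : u = 0 by apply: dotp_eq0; rewrite -enorm_sq a0 expr0n.
  have -> : dotp u v = 0 by rewrite u0 -(scale0r 0) dotpZl mul0r.
  by rewrite a0 mul0r.
have [b0|b0] := eqVneq (enorm v) 0.
  have v0 : v = 0 by apply: dotp_eq0; rewrite -enorm_sq b0 expr0n.
  have -> : dotp u v = 0 by rewrite v0 -(scale0r 0) dotpZr mul0r.
  by rewrite b0 mulr0.
have := dotp_ge0 (enorm v *: u - enorm u *: v).
rewrite dotp_sub_sq !dotpZl !dotpZr -!enorm_sq.
have ha : 0 < enorm u by rewrite lt_neqAle eq_sym a0 enorm_ge0.
have hb : 0 < enorm v by rewrite lt_neqAle eq_sym b0 enorm_ge0.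
set a := enorm u; set b := enorm v; set t := dotp u v => h.
have hab : 0 < a * b by rewrite mulr_gt0.
nra.
Qed.

End Aux.

Local Open Scope classical_set_scope.
Lemma enorm_gt0 (R : realType) n (r : 'rV[R]_n) : r != 0 -> 0 < enorm r.
Proof.
move=> r0; rewrite /enorm sqrtr_gt0 lt_neqAle dotp_ge0 andbT eq_sym.
by apply: contra r0 => /eqP /dotp_eq0 ->.
Qed.

Lemma K1 (R : realType) n p (d : 'I_p -> 'rV[R]_n) kappa :
  0 < kappa -> kappa <= cm d -> (forall i, 0 < enorm (d i)) ->
  forall r, r != 0 -> exists i, kappa * (enorm (d i) * enorm r) <= dotp (d i) r.
Proof.
move=> k0 hcm hd r r0.
have rpos := enorm_gt0 r0.
have hc : kappa <= Defs.cos_max d r.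
  move: hcm; rewrite /cm.
  set S := [set t | _].
  case: (pselect (has_lbound S)) => hl h.
    by apply: (le_trans h); apply: ge_inf => //; exists r.
  rewrite inf_out in h; first by move: h; rewrite leNgt k0.
  by case.
apply: contrapT => hn.
have hlt : forall i, dotp (d i) r / (enorm (d i) * enorm r) < kappa.
  move=> i; rewrite ltr_pdivrMr ?mulr_gt0 //; rewrite ltNge; apply/negP => h.
  by apply: hn; exists i.
set m := \big[Num.max/0]_(i < p) (dotp (d i) r / (enorm (d i) * enorm r)).
have hm : m < kappa by apply: bigmax_lt.
have : Defs.cos_max d r <= m.
  rewrite /Defs.cos_max; set T := [set t | _].
  case: (pselect (has_sup T)) => hs.
    apply: ge_sup; first by case: hs.
    by move=> t [i [_ ->]]; apply: le_bigmax.
  rewrite sup_out //; exact: bigmax_ge_id.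
lra.
Qed.

Lemma cont_sum (R : realType) (T : topologicalType) (I : Type) (s : seq I)
  (g : I -> T -> R) : (forall i, continuous (g i)) ->
  continuous (fun x => \sum_(i <- s) g i x).
Proof.
move=> hg; elim: s => [|a s IH].
  by under eq_fun do rewrite big_nil; exact: cst_continuous.
under eq_fun do rewrite big_cons.
by move=> x; apply: continuousD; [exact: hg | exact: IH].
Qed.

Lemma cont_mul (R : realType) (T : topologicalType) (s t : T -> R) :
  continuous s -> continuous t -> continuous (fun x => s x * t x).
Proof. by move=> hs ht x; exact: (continuousM (hs x) (ht x)). Qed.

Lemma cont_sub (R : realType) (T : topologicalType) (s t : T -> R) :
  continuous s -> continuous t -> continuous (fun x => s x - t x).
Proof. by move=> hs ht x; exact: (continuousB (hs x) (ht x)). Qed.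

End Aux.
Import Aux.

Theorem lemma3p3 (R : realType) (n p : nat) (x : 'rV[R]_n)
    (alpha kappa dmin : R) (d : 'I_p -> 'rV[R]_n) :
  0 < alpha -> 0 < kappa -> 0 < dmin ->
  pos_spanning d ->
  kappa <= cm d ->
  (forall i : 'I_p, dmin * alpha <= enorm (d i)) ->
  Lambda_pss d x alpha (1 / (dmin * kappa)).
Proof.
move=> ha hk hdm hps hcm hn v hv.
rewrite /cball subr0 in hv.
set L := 1 / (dmin * kappa).
have hL : 0 < L by rewrite /L divr_gt0 // mulr_gt0.
have hdpos : forall i, 0 < enorm (d i).
  by move=> i; apply: lt_le_trans (hn i); rewrite mulr_gt0.
have hLk : L * kappa * dmin = 1.
  rewrite /L; field; apply/andP; split; by rewrite gt_eqF.
pose A : set 'rV[R]_p := (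
  (\bigcap_(i in [set: 'I_p]) ((fun c : 'rV[R]_p => c 0 i) @^-1` [set x | 0 <= x]))
  `&` ((fun c : 'rV[R]_p => \sum_(i < p) c 0 i) @^-1` [set x | x <= L]))%classic.
pose rc (c : 'rV[R]_p) := v - \sum_(i < p) c 0 i *: d i.
pose f c := dotp (rc c) (rc c).
have A0 : (A !=set0)%classic.
  exists 0; split => [i _ /=|/=]; first by rewrite mxE.
  by rewrite big1 ?ltW // => i _; rewrite mxE.
have cA : compact A.
  apply: bounded_closed_compact.
    exists L; split; first exact: gtr0_real.
    move=> M hM c [Ac1 Ac2].
    rewrite /=; have -> : `|c| = mx_norm c by []. rewrite mx_normrE.
    apply: bigmax_le; first by apply: ltW; apply: lt_trans hM.
    move=> [a b] _ /=; rewrite ord1 ger0_norm; last exact: (Ac1 b I).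
    apply: (le_trans _ (ltW (le_lt_trans Ac2 hM))) => /=.
    rewrite (bigD1 b) //= lerDl; apply: sumr_ge0 => j _; exact: (Ac1 j I).
  apply: closedI.
    apply: closed_bigI => i _; apply: preimage_closed; last exact: closed_ge.
    by move=> c _; exact: coord_continuous.
  apply: preimage_closed; last exact: closed_le.
  move=> c _; apply: cont_sum => i; exact: coord_continuous.
have cf : {within A, continuous f}%classic.
  apply: continuous_subspaceT.
  have -> : f = fun c => \sum_(k < n) ((v 0 k - \sum_(i < p) c 0 i * d i 0 k) *
        (v 0 k - \sum_(i < p) c 0 i * d i 0 k)).
    apply: funext => c; rewrite /f /dotp; apply: eq_bigr => k _.
    by rewrite /rc !mxE summxE; under eq_bigr do rewrite mxE.
  apply: cont_sum => k; apply: cont_mul; apply: cont_sub;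
    (try exact: cst_continuous); apply: cont_sum => i;
    (apply: cont_mul; [exact: coord_continuous|exact: cst_continuous]).
have [c cA' cmin] := EVT_min_rV A0 cA cf.
rewrite inE in cA'; case: cA' => cpos csum.
have cpos' : forall j, 0 <= c 0 j by move=> j; exact: (cpos j I).
have f0 : 0 <= f c by exact: dotp_ge0.
have [fz|fpos] : f c = 0 \/ 0 < f c.
  by move: f0; rewrite le_eqVlt => /orP[/eqP <-|->]; [left|right].
  exists (fun i => c 0 i); split => //; split => //.
  have := dotp_eq0 fz; rewrite /rc => /eqP; rewrite subr_eq0 => /eqP //.
exfalso.
set r := rc c.
have r0 : r != 0.
  apply/eqP => r0; move: fpos; rewrite /f -/r r0 /dotp big1 ?ltxx // => k _.
  by rewrite mxE mul0r.
have [i hi] := K1 hk hcm hdpos r0.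
have hS : \sum_(j < p) c 0 j *: d j = v - r.
  by rewrite /r /rc opprB addrCA subrr addr0.
set w := L *: d i - (v - r).
have hw0 := dotp_ge0 w.
have hrn := enorm_ge0 r.
have hrw : f c <= dotp r w.
  rewrite /w dotpBr dotpBr dotpZr (dotpC r (d i)) -/(f c).
  have h1 := CS r v.
  have h2 : enorm r * enorm v <= enorm r * alpha by rewrite ler_wpM2l.
  have h3 : kappa * (dmin * alpha) * enorm r <= dotp (d i) r.
    apply: le_trans hi; rewrite -mulrA; apply: ler_wpM2l; first exact: ltW.
    by apply: ler_wpM2r.
  have h4 : alpha * enorm r <= L * dotp (d i) r.
    apply: le_trans (ler_wpM2l (ltW hL) h3).
    by rewrite !mulrA hLk mul1r.
  lra.
set s := f c / (f c + dotp w w).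
have hD : 0 < f c + dotp w w by lra.
have hs0 : 0 < s by rewrite /s divr_gt0.
have hs1 : s <= 1 by rewrite /s ler_pdivrMr // mul1r; lra.
have hsw : s * dotp w w <= f c.
  rewrite /s mulrAC ler_pdivrMr // ler_wpM2l //; lra.
pose c' := (1 - s) *: c + (s * L) *: delta_mx 0 i.
have hc' : forall j, c' 0 j = (1 - s) * c 0 j + (s * L) * (i == j)%:R.
  by move=> j; rewrite !mxE eqxx /= eq_sym.
have c'A : A c'.
  split => [j _ /=|/=].
    rewrite hc'; apply: addr_ge0; apply: mulr_ge0.
    - lra.
    - exact: cpos'.
    - exact: ltW (mulr_gt0 hs0 hL).
    - by case: (i == j).
  under eq_bigr do rewrite hc'.
  rewrite big_split /= -mulr_sumr -mulr_sumr.
  have hd1 : \sum_(j < p) (i == j)%:R = 1 :> R.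
    rewrite (bigD1 i) //= eqxx big1 ?addr0 //.
    by move=> j /negbTE; rewrite eq_sym => ->.
  rewrite hd1 mulr1.
  have : (1 - s) * (\sum_(j < p) c 0 j) <= (1 - s) * L by apply: ler_wpM2l => //; lra.
  lra.
have rc' : rc c' = r - s *: w.
  rewrite /rc.
  have -> : \sum_(j < p) c' 0 j *: d j = (1 - s) *: (v - r) + (s * L) *: d i.
    under eq_bigr do rewrite hc' scalerDl -scalerA.
    rewrite big_split /= -scaler_sumr hS; congr (_ + _).
    rewrite (bigD1 i) //= eqxx mulr1 big1 ?addr0 //.
    by move=> j /negbTE; rewrite eq_sym => ->; rewrite mulr0 scale0r.
  by apply/matrixP => a b; rewrite /w !mxE; ring.
have := cmin c' (mem_set c'A).
have hfc : dotp r r = f c by [].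
rewrite /f rc' -/r (dotp_sub_sq r) !dotpZr !dotpZl hfc => h.
have h5 : s * (s * dotp w w) <= s * f c by apply: ler_wpM2l => //; exact: ltW.
have h6 : s * f c <= s * dotp r w by apply: ler_wpM2l => //; exact: ltW.
have h7 : 0 < s * f c by apply: mulr_gt0.
lra.
Qed.
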